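(* Let $X$ be a metric space, $\mathscr{F}\in\mathrm{IFS}_k(X)$, and let $B\subset X$ be an open set with $X=\overline{\mathcal{O}^+_{\mathscr{F}}(B)}=\mathcal{O}^-_{\mathscr{F}}(B)$. Suppose there are maps $\{h_i\}_{i\geq1}\subset\langle\mathscr{F}\rangle^+$ such that $B\subset\bigcup_{i=1}^\infty h_i(B)$ and $\lim_{n\to\infty}\mathrm{diam}(h_{i_1}\circ\dots\circ h_{i_n}(B))=0$ for every sequence $(i_n)_{n\geq1}$ of positive integers with $h_{i_1}\circ\dots\circ h_{i_n}(B)\cap B\neq\emptyset$ for all $n$. Then $\mathscr{F}$ is minimal.
   Context: $\mathrm{IFS}_k(X)$ is the set of families of $k$ locally Lipschitz homeomorphisms of $X$ (up to reordering). $\langle\mathscr{F}\rangle^+$ is the semigroup of finite compositions of elements of $\mathscr{F}$. $\mathcal{O}^+_{\mathscr{F}}(A)=\{h(x):h\in\langle\mathscr{F}\rangle^+,x\in A\}$, $\mathcal{O}^-_{\mathscr{F}}(A)=\{h^{-1}(x):h\in\langle\mathscr{F}\rangle^+,x\in A\}$. $\mathscr{F}$ is minimal if $\mathcal{O}^+_{\mathscr{F}}(\{x\})$ is dense for every $x\in X$. *)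

(* Defs.v *)
From HB Require Import structures.
From mathcomp Require Import all_boot all_order all_algebra.
From mathcomp Require Import all_classical all_reals all_analysis.
Set Implicit Arguments. Unset Strict Implicit. Unset Printing Implicit Defensive.
Import Order.TTheory GRing.Theory Num.Theory.
Local Open Scope classical_set_scope.
Local Open Scope ring_scope.

Section IFSDefs.
Context {R : realType} {X : metricType R}.

Definition locally_lipschitz (f : X -> X) : Prop :=
  forall x : X, exists2 U : set X, nbhs x U &
    exists L : R, forall y z, U y -> U z -> mdist (f y) (f z) <= L * mdist y z.

Definition homeomorphism (f : X -> X) : Prop :=
  exists g : X -> X, [/\ cancel f g, cancel g f, continuous f & continuous g].

Definition is_IFS (k : nat) (F : 'I_k -> X -> X) : Prop :=
  forall i, locally_lipschitz (F i) /\ homeomorphism (F i).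

Definition compw (k : nat) (F : 'I_k -> X -> X) (w : seq 'I_k) : X -> X :=
  foldr (fun i g => F i \o g) id w.

Definition semigroup (k : nat) (F : 'I_k -> X -> X) : set (X -> X) :=
  [set h | exists2 w : seq 'I_k, w != [::] & h = compw F w].

Definition orbit_plus (k : nat) (F : 'I_k -> X -> X) (A : set X) : set X :=
  [set y | exists h, semigroup F h /\ exists2 x, A x & y = h x].

(* { h^{-1}(x) : h in <F>^+, x in A }; h is a bijection so h^{-1}(x) is the
   unique y with h y = x *)
Definition orbit_minus (k : nat) (F : 'I_k -> X -> X) (A : set X) : set X :=
  [set y | exists h, semigroup F h /\ exists2 x, A x & h y = x].

Definition minimal (k : nat) (F : 'I_k -> X -> X) : Prop :=
  forall x : X, closure (orbit_plus F [set x]) = setT.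

Definition diam (A : set X) : \bar R :=
  ereal_sup [set (mdist x y)%:E | x in A & y in A].

Definition hcomp (h : nat -> X -> X) (s : nat -> nat) (n : nat) : X -> X :=
  foldr (fun j g => h (s j) \o g) id (iota 0 n).

End IFSDefs.

(* Main.v *)
Require Import Defs.
From HB Require Import structures.
From mathcomp Require Import all_boot all_order all_algebra.
From mathcomp Require Import all_classical all_reals all_analysis.
Import Order.TTheory GRing.Theory Num.Theory.
Local Open Scope classical_set_scope.
Local Open Scope ring_scope.

Section Helpers.
Context {R : realType} {X : metricType R}.

Lemma foldr_comp_gen (T : Type) (g : T -> X -> X) s (a : X -> X) x :
  foldr (fun i f => g i \o f) a s x = foldr (fun i f => g i \o f) id s (a x).
Proof. by elim: s => //= i s IH; rewrite IH. Qed.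

Lemma compw_cat k (F : 'I_k -> X -> X) w1 w2 :
  compw F (w1 ++ w2) = compw F w1 \o compw F w2.
Proof. by apply/funext => x; rewrite /compw foldr_cat foldr_comp_gen. Qed.

Lemma semigroup_comp k (F : 'I_k -> X -> X) f g :
  semigroup F f -> semigroup F g -> semigroup F (f \o g).
Proof.
case=> w1 w1n -> [w2 _ ->]; exists (w1 ++ w2); last by rewrite compw_cat.
by case: w1 w1n.
Qed.

Lemma hcompS (h : nat -> X -> X) s n x :
  hcomp h s n.+1 x = hcomp h s n (h (s n) x).
Proof. by rewrite /hcomp -addn1 iotaD foldr_cat foldr_comp_gen. Qed.

Lemma hcomp_semi k (F : 'I_k -> X -> X) (h : nat -> X -> X) s n :
  (forall i, semigroup F (h i)) -> (0 < n)%N -> semigroup F (hcomp h s n).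
Proof.
move=> Hh; elim: n => // n IH _.
have -> : hcomp h s n.+1 = hcomp h s n \o h (s n).
  by apply/funext => x; rewrite hcompS.
case: n IH => [_|n IH].
  have -> : hcomp h s 0 \o h (s 0%N) = h (s 0%N) by [].
  exact: Hh.
by apply: semigroup_comp => //; exact: IH.
Qed.

Lemma compw_cont k (F : 'I_k -> X -> X) w :
  (forall i, continuous (F i)) -> continuous (compw F w).
Proof.
move=> Fc; elim: w => [|i w IH] x /=; first exact: cvg_id.
by apply: continuous_comp; [exact: IH | exact: Fc].
Qed.

End Helpers.

Theorem mainTheorem13 (R : realType) (X : metricType R) (k : nat)
  (F : 'I_k -> X -> X) (B : set X) (h : nat -> X -> X) :
  is_IFS F ->
  open B ->
  setT = closure (orbit_plus F B) ->
  setT = orbit_minus F B ->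
  (forall i, semigroup F (h i)) ->
  B `<=` \bigcup_i (h i @` B) ->
  (forall s : nat -> nat,
     (forall n, (0 < n)%N -> (hcomp h s n @` B) `&` B !=set0) ->
     (fun n => diam (hcomp h s n @` B)) @ \oo --> 0%E) ->
  minimal F.
Proof.
move=> HIFS Bo Hcl Hmin Hh Hcov Hdiam x.
have Fc : forall i, continuous (F i).
  by move=> i; case: (HIFS i) => _ [g [_ _ ? _]].
apply/seteqP; split => // p _ U Up.
have pcl : closure (orbit_plus F B) p by rewrite -Hcl.
rewrite nbhsE in Up; case: Up => V [Vo Vp] VU.
have [q [[f [fS [b Bb qfb]]] Vq]] := pcl V (open_nbhs_nbhs (conj Vo Vp)).
subst q.
have fc : continuous f by case: fS => w _ ->; exact: compw_cont.
have nW : nbhs b (B `&` f @^-1` V).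
  apply: filterI; first exact: (open_nbhs_nbhs (conj Bo Bb)).
  exact: (fc b V (open_nbhs_nbhs (conj Vo Vq))).
rewrite -metricType_numDomainType.filter_from_mdist_nbhs in nW; case: nW => e /= e0 eW.
have sel : forall z, exists pr : nat * X, B z -> B pr.2 /\ z = h pr.1 pr.2.
  move=> z; case: (pselect (B z)) => Bz; last by exists (0%N, z).
  have [i _ [c Bc <-]] := Hcov z Bz; by exists (i, c).
have [sel' Hsel] := boolp.choice sel.
pose c n := iter n (fun z => (sel' z).2) b.
pose t n := (sel' (c n)).1.
have Hc : forall n, B (c n) /\ hcomp h t n (c n) = b.
  elim => [|n [Bcn Hn]]; first by [].
  have [Bc' Ec] := Hsel _ Bcn.
  split; first exact: Bc'.
  by rewrite hcompS -[h (t n) _]/(h (sel' (c n)).1 (sel' (c n)).2) -Ec.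
have Hd := Hdiam t (fun n _ => ex_intro _ b (conj (ex_intro2 _ _ (c n) (proj1 (Hc n)) (proj2 (Hc n))) Bb)).
have Hnb : nbhs (0%E : \bar R) (fun u => u < e%:E)%E.
  by apply: open_ereal_lt'; rewrite lte_fin.
have [N _ HN] := Hd _ Hnb.
have Hmx : orbit_minus F B x by rewrite -Hmin.
case: Hmx => g [gS [x0 Bx0 gx]].
set z := hcomp h t N.+1 x0.
have zd : (mdist b z < e).
  have HNd := HN N.+1 (leqnSn N).
  rewrite -lte_fin; apply: le_lt_trans HNd.
  apply: ereal_sup_ubound; exists b.
    by exists (c N.+1) => //; [exact: (proj1 (Hc N.+1)) | exact: (proj2 (Hc N.+1))].
  by exists z => //; exists x0.
have [_ Vfz] := eW z zd.
exists (f z); split; last exact: VU.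
exists (f \o hcomp h t N.+1 \o g); split.
  apply: semigroup_comp => //; apply: semigroup_comp => //.
  exact: hcomp_semi.
exists x; first by [].
by rewrite /z /= gx.
Qed.
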